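(* Let $K$ be a field of characteristic $p>0$ with $[K:K^p]<\infty$, and set $K'=K^{1/p}$. Let $N_0$ be the kernel of the morphism $\mathbf{G}_a^{(1/p)}\to\mathbf{G}_a$ described below. Then the endomorphism ring $\operatorname{End}_K(N_0)$ of $N_0$ as a $K$-group scheme is canonically isomorphic to $K'$, where $a'\in K'$ acts on $N_0$ as the restriction of multiplication by $a'$ on $\mathbf{G}_a^{(1/p)}$.
   Context: Here $\mathbf{G}_a^{(1/p)}$ is the Weil restriction of $\mathbf{G}_a$ along the absolute Frobenius $\operatorname{Spec}K\to\operatorname{Spec}K$; it is identified with $\operatorname{Res}_{K'/K}\mathbf{G}_a$, i.e. $R\mapsto R\otimes_K K'$, and the morphism $\mathbf{G}_a^{(1/p)}\to\mathbf{G}_a$ (the composite of the relative Frobenius of $\mathbf{G}_a^{(1/p)}$ with the adjunction counit) is given by $x\otimes a'\mapsto x^p a'^p$. Concretely, for a $p$-basis $t_1,\dots,t_r$ of $K$, $N_0$ is the closed subgroup scheme of $\mathbf{G}_a^{p^r}$ (coordinates $x_{i(1)\cdots i(r)}$, $0\le i(j)\le p-1$) defined by $\sum_{i(1),\dots,i(r)}x_{i(1)\cdots i(r)}^p t_1^{i(1)}\cdots t_r^{i(r)}=0$. Multiplication by $a'\in K'$ on $\mathbf{G}_a^{(1/p)}$ is compatible with multiplication by $a'^p\in K$ on $\mathbf{G}_a$, hence preserves $N_0$. *)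

(* Defs.v *)
From HB Require Import structures.
From mathcomp Require Import all_boot all_order all_algebra all_field.
Set Implicit Arguments. Unset Strict Implicit. Unset Printing Implicit Defensive.
Import GRing.Theory.
Local Open Scope ring_scope.

(* K a field, L = K' = K^{1/p} given as a (finite) field extension of K.
   G_a^{(1/p)}(A) = A (x)_K L is identified with row vectors 'rV[A]_n,
   n = [L:K], via the K-basis  pb = vbasis {:L}  of L:
   x  <->  sum_i x_i (x) pb_i. *)
Section N0.
Variables (K : fieldType) (L : fieldExtType K) (p : nat).

Definition pb : (\dim {:L}).-tuple L := vbasis {:L}.

(* the element pb_i ^ p, which lies in K, viewed as an element of K *)
Definition frobc (i : 'I_(\dim {:L})) : K :=
  coord [tuple (1 : L)] ord0 (tnth pb i ^+ p).

(* N_0(A) = kernel of  G_a^{(1/p)}(A) -> G_a(A),  x (x) a' |-> x^p a'^p *)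
Definition inN0 (A : comAlgType K) (x : 'rV[A]_(\dim {:L})) : bool :=
  \sum_(i < \dim {:L}) (x 0 i) ^+ p * (frobc i)%:A == 0.

Definition mulL (a : L) (A : comAlgType K) (x : 'rV[A]_(\dim {:L}))
  : 'rV[A]_(\dim {:L}) :=
  \row_j \sum_(i < \dim {:L}) x 0 i * (coord pb j (a * tnth pb i))%:A.

(* an endomorphism of the K-group scheme N_0, given by its functor of points
   on commutative K-algebras (Yoneda): a family of maps preserving N_0,
   additive on N_0, and natural in K-algebra morphisms.  Two such are equal
   as endomorphisms iff they agree on all N_0(A). *)
Definition is_endo
  (eta : forall A : comAlgType K, 'rV[A]_(\dim {:L}) -> 'rV[A]_(\dim {:L})) : Prop :=
  [/\ (forall (A : comAlgType K) x, inN0 x -> inN0 (eta A x)),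
      (forall (A : comAlgType K) x y, inN0 x -> inN0 y ->
          eta A (x + y) = eta A x + eta A y) &
      (forall (A B : comAlgType K) (f : {lrmorphism A -> B}) x, inN0 x ->
          map_mx f (eta A x) = eta B (map_mx f x))].

End N0.

(* Main.v *)
Require Import Defs.
From HB Require Import structures.
From mathcomp Require Import all_boot all_order all_algebra all_field.
From mathcomp Require Import mpoly.
Import GRing.Theory.
Local Open Scope ring_scope.

Module Helpers.
Import Pdiv.RingMonic Pdiv.Ring.
Set Implicit Arguments. Unset Strict Implicit. Unset Printing Implicit Defensive.

Lemma frob_sum (R : comNzRingType) (p : nat) (hR : p \in [pchar R])
   (I : Type) (r : seq I) (P : pred I) (F : I -> R) :
  (\sum_(i <- r | P i) F i) ^+ p = \sum_(i <- r | P i) (F i) ^+ p.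
Proof. exact: (rmorph_sum (pFrobenius_aut hR)). Qed.

Lemma frobD (R : comNzRingType) (p : nat) (hR : p \in [pchar R]) (x y : R) :
  (x + y) ^+ p = x ^+ p + y ^+ p.
Proof. exact: (rmorphD (pFrobenius_aut hR)). Qed.

Lemma frobB (R : comNzRingType) (p : nat) (hR : p \in [pchar R]) (x y : R) :
  (x - y) ^+ p = x ^+ p - y ^+ p.
Proof. exact: (rmorphB (pFrobenius_aut hR)). Qed.

Section Basics.
Variables (K : fieldType) (L : fieldExtType K) (p : nat).
Hypothesis hp : p \in [pchar K].
Hypothesis hL1 : forall y : L, y ^+ p \in 1%VS.
Local Notation n := (\dim {:L}).

Lemma pprime : prime p. Proof. exact: pcharf_prime hp. Qed.
Lemma pgt1 : (1 < p)%N. Proof. exact: prime_gt1 pprime. Qed.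

Lemma pcharA (A : lalgType K) : p \in [pchar A].
Proof. by rewrite (pchar_lalg A). Qed.

Lemma pb_free : free (pb L).
Proof. exact: basis_free (vbasisP {:L}). Qed.

Lemma pb_nz (i : 'I_n) : tnth (pb L) i != 0.
Proof.
exact: (free_not0 pb_free (mem_tnth i (pb L))).
Qed.

Lemma frobcE (i : 'I_n) : tnth (pb L) i ^+ p = (frobc (L:=L) p i)%:A.
Proof.
rewrite /frobc; have /vlineP [k hk] := hL1 (tnth (pb L) i).
have hf : free [tuple (1 : L)] by rewrite /free /= span_seq1 dim_vline oner_neq0.
have h1 := coord_free ord0 ord0 hf; rewrite eqxx /= in h1.
by rewrite hk linearZ /= h1 mulr1.
Qed.

Local Notation pbi i := (tnth (pb L) i).
Local Notation cf a i j := (coord (pb L) j (a * tnth (pb L) i)).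

Lemma pb_span (v : L) : v = \sum_(i < n) coord (pb L) i v *: pbi i.
Proof.
have hv : v \in <<pb L>>%VS by rewrite (span_basis (vbasisP {:L})) memvf.
by rewrite {1}(coord_span hv); apply: eq_bigr => i _; rewrite (tnth_nth 0).
Qed.

Lemma coord_pb (i j : 'I_n) : coord (pb L) j (pbi i) = (i == j)%:R.
Proof. by rewrite (tnth_nth 0) coord_free // pb_free. Qed.

Lemma coord_pb_sum (k : 'I_n -> K) (j : 'I_n) :
  coord (pb L) j (\sum_(i < n) k i *: pbi i) = k j.
Proof.
have := coord_sum_free k j pb_free.
by under eq_bigr do rewrite -tnth_nth.
Qed.

Lemma in_alg_inj (x y : K) : (x%:A : L) = y%:A -> x = y.
Proof. exact: (fmorph_inj (in_alg L)). Qed.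

Lemma mulL1 (A : comAlgType K) (x : 'rV[A]_n) : mulL 1 x = x.
Proof.
apply/rowP => j; rewrite mxE (bigD1 j) //= big1 => [|i /negbTE hij].
  by rewrite mul1r coord_pb eqxx scale1r mulr1 addr0.
by rewrite mul1r coord_pb hij scale0r mulr0.
Qed.

Lemma mulLD (a b : L) (A : comAlgType K) (x : 'rV[A]_n) :
  mulL (a + b) x = mulL a x + mulL b x.
Proof.
apply/rowP => j; rewrite !mxE -big_split /=; apply: eq_bigr => i _.
by rewrite mulrDl linearD /= scalerDl mulrDr.
Qed.

Lemma cfM (a b : L) (k j : 'I_n) :
  cf (a * b) k j = \sum_(i < n) cf b k i * cf a i j.
Proof.
rewrite -mulrA {1}(pb_span (b * pbi k)) mulr_sumr linear_sum /=.
by apply: eq_bigr => i _; rewrite -scalerAr linearZ.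
Qed.

Lemma mulLM (a b : L) (A : comAlgType K) (x : 'rV[A]_n) :
  mulL (a * b) x = mulL a (mulL b x).
Proof.
apply/rowP => j; rewrite !mxE.
under [RHS]eq_bigr do rewrite mxE mulr_suml.
rewrite exchange_big /=; apply: eq_bigr => k _.
rewrite cfM scaler_suml mulr_sumr; apply: eq_bigr => i _.
by rewrite -mulrA -scalerAl mul1r scalerA.
Qed.

Lemma mulL_add (a : L) (A : comAlgType K) (x y : 'rV[A]_n) :
  mulL a (x + y) = mulL a x + mulL a y.
Proof.
apply/rowP => j; rewrite !mxE -big_split /=; apply: eq_bigr => i _.
by rewrite mxE mulrDl.
Qed.

Lemma mulL_map (a : L) (A B : comAlgType K) (f : {lrmorphism A -> B}) (x : 'rV[A]_n) :
  map_mx f (mulL a x) = mulL a (map_mx f x).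
Proof.
apply/rowP => j; rewrite !mxE rmorph_sum; apply: eq_bigr => i _.
rewrite [in RHS]mxE !mulr_algr; exact: linearZ.
Qed.

Lemma frob_alg (A : comAlgType K) (k : K) : (k%:A : A) ^+ p = (k ^+ p)%:A.
Proof. by rewrite exprZn expr1n. Qed.

Lemma algM (A : lalgType K) (u v : K) : ((u * v)%:A : A) = u%:A * v%:A.
Proof. by rewrite -scalerAl mul1r scalerA. Qed.

Lemma cf_frob (a : L) (lam : K) (hl : a ^+ p = lam%:A) (i : 'I_n) :
  \sum_(j < n) cf a i j ^+ p * frobc (L:=L) p j = lam * frobc (L:=L) p i.
Proof.
apply: in_alg_inj.
rewrite scaler_suml algM -!frobcE -hl -exprMn.
rewrite [in RHS](pb_span (a * pbi i)) (frob_sum (pcharA L)).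
by apply: eq_bigr => j _; rewrite exprZn frobcE scalerA.
Qed.

Lemma mulL_N0 (a : L) (A : comAlgType K) (x : 'rV[A]_n) :
  inN0 p x -> inN0 p (mulL a x).
Proof.
rewrite /inN0 => /eqP hx; apply/eqP.
have /vlineP [lam hl] := hL1 a.
have hl' : a ^+ p = lam%:A by rewrite hl.
under eq_bigr do rewrite mxE (frob_sum (pcharA A)).
under eq_bigr do rewrite mulr_suml.
rewrite exchange_big /=.
transitivity (\sum_(i < n) lam%:A * ((x 0 i) ^+ p * (frobc (L:=L) p i)%:A)); last first.
  by rewrite -mulr_sumr hx mulr0.
apply: eq_bigr => i _.
transitivity (x 0 i ^+ p * (\sum_(j < n) cf a i j ^+ p * frobc (L:=L) p j)%:A).
  rewrite scaler_suml mulr_sumr; apply: eq_bigr => j _.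
  by rewrite exprMn frob_alg -mulrA algM.
by rewrite (cf_frob hl') algM mulrCA.
Qed.

Lemma mulL_endo (a : L) : is_endo p (mulL a).
Proof.
split.
- by move=> A x; apply: mulL_N0.
- by move=> A x y _ _; apply: mulL_add.
- by move=> A B f x _; apply: mulL_map.
Qed.

End Basics.


Section Dual.
Variables (K : fieldType) (A : comAlgType K).
Definition dual : Type := (A * A)%type.
HB.instance Definition _ := Choice.on dual.
HB.instance Definition _ := GRing.Lmodule.on dual.
Definition dmul (x y : dual) : dual := (x.1 * y.1, x.1 * y.2 + x.2 * y.1).
Definition d1 : dual := (1, 0).
Fact dmulA : associative dmul.
Proof.
move=> [a b] [c d] [e f]; rewrite /dmul /=; congr (_, _); first by rewrite mulrA.
by rewrite !mulrDr !mulrDl !mulrA addrA.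
Qed.
Fact dmulC : commutative dmul.
Proof. by move=> [a b] [c d]; rewrite /dmul /= mulrC addrC [b * _]mulrC [a * _]mulrC. Qed.
Fact dmul1 : left_id d1 dmul.
Proof. by move=> [a b]; rewrite /dmul /= !mul1r mul0r addr0. Qed.
Fact dmulDl : left_distributive dmul +%R.
Proof.
move=> [a b] [c d] [e f]; rewrite /dmul /=.
congr (_, _); first by rewrite mulrDl.
by rewrite !mulrDl addrACA.
Qed.
Fact d1_neq0 : d1 != 0.
Proof. by apply/eqP => -[] /eqP; rewrite oner_eq0. Qed.
HB.instance Definition _ := GRing.Zmodule_isComNzRing.Build dual dmulA dmulC dmul1 dmulDl d1_neq0.
Lemma dmulE (x y : dual) : x * y = (x.1 * y.1, x.1 * y.2 + x.2 * y.1).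
Proof. by []. Qed.
Fact dscaleAl (k : K) (x y : dual) : k *: (x * y) = ((k *: x : dual) * y : dual).
Proof.
move: x y => [a b] [c d].
transitivity ((k *: (a * c), k *: (a * d + b * c)) : dual); first reflexivity.
transitivity (((k *: a) * c, (k *: a) * d + (k *: b) * c) : dual); last reflexivity.
by rewrite -!scalerAl scalerDr.
Qed.
HB.instance Definition _ := GRing.Lmodule_isLalgebra.Build K dual dscaleAl.
HB.instance Definition _ := GRing.Lalgebra_isComAlgebra.Build K dual.

Definition deps : dual := (0, 1).
Lemma d1E : (1 : dual) = (1, 0). Proof. by []. Qed.
Lemma dexpE (a b : A) (k : nat) :
  ((a, b) : dual) ^+ k = (a ^+ k, (b * a ^+ k.-1) *+ k).
Proof.
elim: k => [|k IH]; first by rewrite expr0 d1E mulr0n.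
rewrite exprS IH dmulE /=; congr (_, _); first by rewrite exprS.
case: k IH => [|k] IH; first by rewrite !expr0 !mulr0n mulr0 add0r !mulr1 mulr1n.
by rewrite /= mulrnAr mulrCA -exprS [in RHS]mulrSr.
Qed.
End Dual.

Section DualMaps.
Variables (K : fieldType) (A B : comAlgType K).

Definition dinj (a : A) : dual A := (a, 0).
Fact dinj_zmod : zmod_morphism dinj.
Proof. by move=> x y; rewrite /dinj; congr pair; rewrite subrr. Qed.
Fact dinj_monoid : monoid_morphism dinj.
Proof.
split=> [|x y]; first reflexivity.
transitivity ((x * y, x * 0 + 0 * y) : dual A); first by rewrite !mulr0 mul0r addr0.
reflexivity.
Qed.
Fact dinj_scal : scalable dinj.
Proof. by move=> k x; rewrite /dinj; congr pair; rewrite scaler0. Qed.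
HB.instance Definition _ := GRing.isZmodMorphism.Build A (dual A) dinj dinj_zmod.
HB.instance Definition _ := GRing.isMonoidMorphism.Build A (dual A) dinj dinj_monoid.
HB.instance Definition _ := GRing.isScalable.Build K A (dual A) *:%R dinj dinj_scal.

Definition dfst (x : dual A) : A := x.1.
Fact dfst_zmod : zmod_morphism dfst. Proof. by []. Qed.
Fact dfst_monoid : monoid_morphism dfst. Proof. by []. Qed.
Fact dfst_scal : scalable dfst. Proof. by []. Qed.
HB.instance Definition _ := GRing.isZmodMorphism.Build (dual A) A dfst dfst_zmod.
HB.instance Definition _ := GRing.isMonoidMorphism.Build (dual A) A dfst dfst_monoid.
HB.instance Definition _ := GRing.isScalable.Build K (dual A) A *:%R dfst dfst_scal.

Variable f : {lrmorphism A -> B}.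
Definition dmap (x : dual A) : dual B := (f x.1, f x.2).
Fact dmap_zmod : zmod_morphism dmap.
Proof. by move=> [a b] [c d]; rewrite /dmap /= !rmorphB. Qed.
Fact dmap_monoid : monoid_morphism dmap.
Proof.
split; first by rewrite /dmap /= rmorph1 rmorph0.
by move=> [a b] [c d]; rewrite /dmap !dmulE /= rmorphD !rmorphM.
Qed.
Fact dmap_scal : scalable dmap.
Proof. by move=> k [a b]; rewrite /dmap /=; congr pair; apply: linearZ. Qed.
HB.instance Definition _ := GRing.isZmodMorphism.Build (dual A) (dual B) dmap dmap_zmod.
HB.instance Definition _ := GRing.isMonoidMorphism.Build (dual A) (dual B) dmap dmap_monoid.
HB.instance Definition _ := GRing.isScalable.Build K (dual A) (dual B) *:%R dmap dmap_scal.
End DualMaps.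

Section DualHorner.
Variables (K : fieldType) (A : comAlgType K).
Lemma horner_dual (P : {poly A}) (a : A) :
  (map_poly (@dinj _ A) P).[((a, 1) : dual A)] = (P.[a], (deriv P).[a]).
Proof.
elim/poly_ind: P => [|P c IH]; first by rewrite map_poly0 deriv0 !horner0.
rewrite rmorphD rmorphM /= map_polyX map_polyC /=.
rewrite [LHS]hornerMXaddC IH dmulE /=.
rewrite [in RHS]hornerMXaddC derivMXaddC hornerD hornerMX.
transitivity ((P.[a] * a + c, P.[a] * 1 + (deriv P).[a] * a + 0) : dual A); first by [].
by rewrite mulr1 addr0.
Qed.
End DualHorner.

Check fun (K : fieldType) (A B : comAlgType K) (f : {lrmorphism A -> B}) =>
  (dmap f : {lrmorphism dual A -> dual B}, @dinj _ A : {lrmorphism A -> dual A}, @dfst _ A : {lrmorphism dual A -> A}).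


Section Univ.
Local Open Scope multi_scope.
Local Open Scope ring_scope.
Variables (K : fieldType) (L : fieldExtType K) (p : nat).
Hypothesis hp : p \in [pchar K].
Hypothesis hL1 : forall y : L, y ^+ p \in 1%VS.
Local Notation n := (\dim {:L}).
Local Notation c i := (frobc (L:=L) p i).
Local Notation R := {mpoly K[n]}.

Lemma n_gt0 : (0 < n)%N.
Proof.
rewrite lt0n dimv_eq0; apply/eqP => h.
have := memvf (1 : L); rewrite h memv0 => /eqP; apply/eqP; exact: oner_neq0.
Qed.
Definition i0 : 'I_n := Ordinal n_gt0.

Lemma p_gt1 : (1 < p)%N. Proof. exact: prime_gt1 (pcharf_prime hp). Qed.
Lemma p_gt0 : (0 < p)%N. Proof. exact: ltnW p_gt1. Qed.

Definition hR : R := - (c i0)^-1 *: \sum_(i < n | i != i0) c i *: 'X_i ^+ p.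
Definition hW : {poly R} := 'X^p - hR%:P.

Lemma size_hW : size hW = p.+1. Proof. exact: size_XnsubC p_gt0. Qed.
Lemma monic_hW : hW \is monic. Proof. exact: monicXnsubC p_gt0. Qed.
Lemma mk_monic_hW : mk_monic hW = hW.
Proof. by rewrite /mk_monic size_hW monic_hW ltnS p_gt0. Qed.

Definition U : Type := {poly %/ hW}.
HB.instance Definition _ := GRing.ComNzRing.on U.

Definition scU (k : K) (u : U) : U := ((k%:MP : R) *: (u : {poly %/ hW})).
Fact scUA a b v : scU a (scU b v) = scU (a * b) v.
Proof. by rewrite /scU scalerA rmorphM. Qed.
Fact scU1 : left_id 1 scU.
Proof. by move=> v; rewrite /scU rmorph1 scale1r. Qed.
Fact scUDr : right_distributive scU +%R.
Proof. by move=> a u v; rewrite /scU scalerDr. Qed.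
Fact scUDl v : {morph scU^~ v : a b / a + b}.
Proof. by move=> a b; rewrite /scU rmorphD scalerDl. Qed.
HB.instance Definition _ := GRing.Zmodule_isLmodule.Build K U scUA scU1 scUDr scUDl.
Fact scUAl (a : K) (u v : U) : a *: (u * v) = (a *: u) * v.
Proof. exact: (@scalerAl R {poly %/ hW}). Qed.
HB.instance Definition _ := GRing.Lmodule_isLalgebra.Build K U scUAl.
HB.instance Definition _ := GRing.Lalgebra_isComAlgebra.Build K U.

Definition qC (r : R) : U := qpolyC hW r.
Definition W : U := qpolyX hW.

Lemma val_qC r : val (qC r) = r%:P. Proof. exact: qpolyCE. Qed.
Lemma val_W : val W = 'X.
Proof. by apply: qpolyXE; rewrite ?size_hW ?ltnS ?p_gt1 // monic_hW. Qed.
Lemma val_one : val (1 : U) = 1. Proof. exact: qpolyCE. Qed.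
Lemma val_add (u v : U) : val (u + v) = val u + val v. Proof. by []. Qed.
Lemma val_mul (u v : U) : val (u * v) = rmodp (val u * val v) hW.
Proof.
transitivity (rmodp (val u * val v) (mk_monic hW)); first by [].
by congr (rmodp _ _); exact: mk_monic_hW.
Qed.
Lemma val_scal (k : K) (u : U) : val (k *: u) = (k%:MP : R) *: val u. Proof. by []. Qed.

HB.instance Definition _ := GRing.RMorphism.copy qC (qpolyC hW).
Lemma qC_add r s : qC (r + s) = qC r + qC s. Proof. exact: rmorphD. Qed.
Lemma qC_mul r s : qC (r * s) = qC r * qC s. Proof. exact: rmorphM. Qed.
Lemma qC_inj : injective qC.
Proof. by move=> r s /(congr1 val); rewrite !val_qC => /polyC_inj. Qed.
Lemma algU (k : K) : (k%:A : U) = qC k%:MP.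
Proof. by apply: val_inj; rewrite val_scal val_one val_qC alg_polyC. Qed.


Lemma c_neq0 i : c i != 0.
Proof.
apply/eqP => h; have := frobcE hL1 i; rewrite h scale0r => /eqP.
by rewrite expf_eq0 (negPf (pb_nz i)) andbF.
Qed.

Lemma qC_exp r k : qC (r ^+ k) = qC r ^+ k. Proof. exact: rmorphXn. Qed.
Lemma qC_sum (I : Type) (r : seq I) (P : pred I) (F : I -> R) :
  qC (\sum_(i <- r | P i) F i) = \sum_(i <- r | P i) qC (F i).
Proof. exact: raddf_sum. Qed.
Lemma qC0 : qC 0 = 0. Proof. exact: raddf0. Qed.

Lemma val_exp (u : U) k : val (u ^+ k) = rmodp (val u ^+ k) hW.
Proof.
transitivity (rmodp (val u ^+ k) (mk_monic hW)); first exact: poly_of_qpolyX.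
by congr (rmodp _ _); exact: mk_monic_hW.
Qed.

Lemma W_exp : W ^+ p = qC hR.
Proof.
apply: val_inj; rewrite val_exp val_W val_qC.
have -> : ('X^p : {poly R}) = 1 * hW + hR%:P by rewrite mul1r /hW subrK.
rewrite rmodp_addl_mul_small ?monic_hW // size_hW ltnS.
exact: leq_trans (size_polyC_leq1 _) p_gt0.
Qed.

Definition uU : 'rV[U]_n := \row_i (if i == i0 then W else qC 'X_i).

Lemma uU_N0 : inN0 p uU.
Proof.
apply/eqP; rewrite (bigD1 i0) //= mxE eqxx W_exp algU -qC_mul.
under eq_bigr => i hi do rewrite mxE (negPf hi) algU -qC_exp -qC_mul.
rewrite -qC_sum -qC_add -qC0; congr qC.
rewrite mulrC mul_mpolyC /hR scalerA mulrN mulfV ?c_neq0 // scaleN1r.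
rewrite addrC; apply/eqP; rewrite subr_eq0; apply/eqP; apply: eq_bigr => i _.
by rewrite mulrC mul_mpolyC.
Qed.

Section Psi.
Variables (A : comAlgType K) (x : 'rV[A]_n) (z : A).
Hypothesis Hx : inN0 p x.

Definition rho : {rmorphism R -> A} :=
  GRing.RMorphism.clone _ _ (mmap (in_alg A) (fun i => if i == i0 then z else x 0 i)) _.
Lemma rho_X i : rho 'X_i = if i == i0 then z else x 0 i.
Proof. by transitivity ((mmap (in_alg A) (fun i => if i == i0 then z else x 0 i)) 'X_i); [|rewrite mmapX mmap1U]. Qed.
Lemma rho_C k : rho k%:MP = k%:A.
Proof. by transitivity ((mmap (in_alg A) (fun i => if i == i0 then z else x 0 i)) k%:MP); [|rewrite mmapC]. Qed.
Lemma rho_Z k r : rho (k *: r) = k%:A * rho r.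
Proof. by transitivity ((mmap (in_alg A) (fun i => if i == i0 then z else x 0 i)) (k *: r)); [|rewrite mmapZ]. Qed.
Lemma rho_add r s : rho (r + s) = rho r + rho s. Proof. exact: rmorphD. Qed.
Lemma rho_mul r s : rho (r * s) = rho r * rho s. Proof. exact: rmorphM. Qed.
Lemma rho_exp r k : rho (r ^+ k) = rho r ^+ k. Proof. exact: rmorphXn. Qed.


Lemma rho_hR : rho hR = x 0 i0 ^+ p.
Proof.
move/eqP: Hx; rewrite (bigD1 i0) //= => /eqP; rewrite addrC addr_eq0 => /eqP hs.
rewrite /hR rho_Z /rho raddf_sum /= -/rho.
transitivity (- ((c i0)^-1)%:A * (\sum_(i < n | i != i0) x 0 i ^+ p * (c i)%:A)).
  rewrite scaleNr; congr (_ * _); apply: eq_bigr => i hi.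
  by rewrite rho_Z rho_exp rho_X (negPf hi) mulrC.
rewrite hs mulrN mulNr opprK mulrCA -algM mulVf ?c_neq0 // scale1r mulr1.
by [].
Qed.

Definition psi of inN0 p x := fun u : U => (map_poly rho (val u)).[x 0 i0].

Lemma psi_hW : (map_poly rho hW).[x 0 i0] = 0.
Proof.
by rewrite /hW rmorphB /= map_polyXn map_polyC /= hornerD hornerN hornerXn hornerC rho_hR subrr.
Qed.

Lemma psi_rmodp (q : {poly R}) : (map_poly rho (rmodp q hW)).[x 0 i0] = (map_poly rho q).[x 0 i0].
Proof.
rewrite {2}(rdivp_eq monic_hW q) rmorphD rmorphM /= hornerD hornerM psi_hW mulr0 add0r.
by [].
Qed.

Fact psi_zmod : zmod_morphism (psi Hx).
Proof. by move=> u v; rewrite /psi /= raddfB /= hornerD hornerN. Qed.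
Fact psi_monoid : monoid_morphism (psi Hx).
Proof.
split; first by rewrite /psi val_one rmorph1 hornerC.
by move=> u v; rewrite /psi val_mul psi_rmodp rmorphM /= hornerM.
Qed.
Fact psi_scal : scalable (psi Hx).
Proof.
move=> k u; rewrite /psi val_scal map_polyZ hornerZ rho_C.
by rewrite mulr_algl.
Qed.
HB.instance Definition _ := GRing.isZmodMorphism.Build U A (psi Hx) psi_zmod.
HB.instance Definition _ := GRing.isMonoidMorphism.Build U A (psi Hx) psi_monoid.
HB.instance Definition _ := GRing.isScalable.Build K U A *:%R (psi Hx) psi_scal.

Lemma psi_qC r : psi Hx (qC r) = rho r.
Proof. by rewrite /psi val_qC map_polyC hornerC. Qed.
Lemma psi_W : psi Hx W = x 0 i0.
Proof. by rewrite /psi val_W map_polyX hornerX. Qed.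


Lemma psi_uU : map_mx (psi Hx) uU = x.
Proof.
apply/rowP => i; rewrite !mxE; case: eqP => [->|/eqP h]; first exact: psi_W.
by rewrite psi_qC rho_X (negPf h).
Qed.

End Psi.

Definition ialg (A : comAlgType K) (k : K^o) : A := k%:A.
Fact ialg_zmod A : zmod_morphism (@ialg A).
Proof. by move=> a b; rewrite /ialg scalerBl. Qed.
Fact ialg_monoid A : monoid_morphism (@ialg A).
Proof. by split=> [|a b]; rewrite /ialg ?scale1r // algM. Qed.
Fact ialg_scal A : scalable (@ialg A).
Proof. by move=> a b; rewrite /ialg scalerA. Qed.
HB.instance Definition _ (A : comAlgType K) := GRing.isZmodMorphism.Build K^o A (@ialg A) (@ialg_zmod A).
HB.instance Definition _ (A : comAlgType K) := GRing.isMonoidMorphism.Build K^o A (@ialg A) (@ialg_monoid A).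
HB.instance Definition _ (A : comAlgType K) := GRing.isScalable.Build K K^o A *:%R (@ialg A) (@ialg_scal A).

Lemma lrmZ (A B : comAlgType K) (f : {lrmorphism A -> B}) k y : f (k *: y) = k *: f y.
Proof. exact: linearZ. Qed.
Lemma lrm_alg (A B : comAlgType K) (f : {lrmorphism A -> B}) k :
  (f : {rmorphism A -> B}) (k%:A) = k%:A.
Proof. by rewrite /= lrmZ rmorph1. Qed.
Lemma lrmZ' (A B : comAlgType K) (f : {lrmorphism A -> B}) k y :
  (f : {rmorphism A -> B}) (k *: y) = k *: (f : {rmorphism A -> B}) y.
Proof. exact: linearZ. Qed.

Lemma N0_0 (A : comAlgType K) : inN0 p (0 : 'rV[A]_n).
Proof.
apply/eqP; apply: big1 => i _; rewrite mxE expr0n.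
by case: p p_gt0 => // ? _; rewrite mul0r.
Qed.

Lemma N0_map (A B : comAlgType K) (f : {lrmorphism A -> B}) (x : 'rV[A]_n) :
  inN0 p x -> inN0 p (map_mx f x).
Proof.
move=> /eqP hx; apply/eqP.
transitivity (f (\sum_i x 0 i ^+ p * (c i)%:A)); last by rewrite hx rmorph0.
rewrite rmorph_sum; apply: eq_bigr => i _; rewrite mxE rmorphM rmorphXn lrm_alg.
by [].
Qed.

Lemma N0_add (A : comAlgType K) (x y : 'rV[A]_n) :
  inN0 p x -> inN0 p y -> inN0 p (x + y).
Proof.
move=> /eqP hx /eqP hy; apply/eqP.
under eq_bigr do rewrite mxE (frobD (pcharA hp A)) mulrDl.
by rewrite big_split /= hx hy addr0.
Qed.

Lemma mpoly_morph_eq (S : comNzRingType) (f g : {rmorphism R -> S}) :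
  (forall k, f k%:MP = g k%:MP) -> (forall i, f 'X_i = g 'X_i) -> f =1 g.
Proof.
move=> hC hX r; rewrite (mpolyE r) !rmorph_sum; apply: eq_bigr => m _.
rewrite -mul_mpolyC !rmorphM hC; congr (_ * _).
rewrite mpolyXE_id !rmorph_prod; apply: eq_bigr => i _.
by rewrite !rmorphXn hX.
Qed.


Lemma valH (q : {poly R}) : val ((map_poly qC q).[W]) = rmodp q hW.
Proof.
elim/poly_ind: q => [|q k IH]; first by rewrite map_poly0 horner0 rmod0p.
rewrite rmorphD rmorphM /= map_polyX map_polyC /= [LHS]/= hornerMXaddC.
rewrite val_add val_mul IH val_W val_qC.
rewrite rmodpD ?monic_hW // rmodp_mulml ?monic_hW //.
rewrite [rmodp k%:P hW]rmodp_small // size_hW ltnS.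
exact: leq_trans (size_polyC_leq1 _) p_gt0.
Qed.

Lemma size_valU (g : U) : (size (val g) <= p)%N.
Proof.
apply: leq_trans (size_npoly g) _.
by rewrite mk_monic_hW size_hW.
Qed.

Lemma E1 (g : U) : (map_poly qC (val g)).[W] = g.
Proof.
apply: val_inj; rewrite valH rmodp_small // size_hW ltnS; exact: size_valU.
Qed.

Section Main.
Unset Implicit Arguments.
Variable eta : forall A : comAlgType K, 'rV[A]_n -> 'rV[A]_n.
Set Implicit Arguments.
Hypothesis Hend : is_endo p eta.

Lemma eta_N0 (A : comAlgType K) (x : 'rV[A]_n) : inN0 p x -> inN0 p (eta A x).
Proof. by case: Hend => h _ _; apply: h. Qed.
Lemma eta_add (A : comAlgType K) (x y : 'rV[A]_n) :
  inN0 p x -> inN0 p y -> eta A (x + y) = eta A x + eta A y.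
Proof. by case: Hend => _ h _; apply: h. Qed.
Lemma eta_nat (A B : comAlgType K) (f : {lrmorphism A -> B}) (x : 'rV[A]_n) :
  inN0 p x -> map_mx f (eta A x) = eta B (map_mx f x).
Proof. by case: Hend => _ _ h; apply: h. Qed.
Lemma eta0 (A : comAlgType K) : eta A 0 = 0.
Proof.
have := eta_add (N0_0 A) (N0_0 A); rewrite addr0 => h.
by apply: (addrI (eta A 0)); rewrite addr0 -h.
Qed.

Lemma deps_exp (A : comAlgType K) : (deps A) ^+ p = 0.
Proof.
rewrite /deps dexpE expr0n mul1r expr0n.
case: p p_gt1 => [|[|q]] //= _.
by rewrite mul0rn.
Qed.

Definition e' : 'rV[dual K^o]_n := \row_i (if i == i0 then @deps K K^o else 0).
Lemma e'_N0 : inN0 p e'.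
Proof.
apply/eqP; apply: big1 => i _; rewrite mxE; case: ifP => _.
  by rewrite deps_exp mul0r.
by rewrite expr0n; case: p p_gt0 => // ? _; rewrite mul0r.
Qed.

Definition E := eta (dual K^o) e'.
Lemma E_fst j : (E 0 j).1 = 0.
Proof.
have h := eta_nat (@dfst _ K^o) e'_N0.
have h0 : map_mx (@dfst _ K^o) e' = 0.
  by apply/rowP => i; rewrite !mxE; case: ifP.
rewrite h0 eta0 in h.
have := congr1 (fun M : 'M[K^o]_(1, n) => M 0 j) h; rewrite !mxE => hh; exact: hh.
Qed.
Definition kk j : K := (E 0 j).2.

Definition e : 'rV[dual U]_n := map_mx (dmap (ialg U)) e'.
Lemma e_N0 : inN0 p e. Proof. exact: N0_map e'_N0. Qed.
Lemma eta_e : eta (dual U) e = map_mx (dmap (ialg U)) E.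
Proof. by rewrite /E eta_nat ?e'_N0. Qed.

Definition uD : 'rV[dual U]_n := map_mx (@dinj _ U) uU + e.
Lemma uD_N0 : inN0 p uD. Proof. exact: N0_add (N0_map _ uU_N0) e_N0. Qed.
Definition zD : dual U := @dinj _ U (qC 'X_i0).
Local Notation phi := (psi zD uD_N0).

Definition G := eta U uU.

Lemma phiG j : phi (G 0 j) = (G 0 j, (kk j)%:A).
Proof.
have h1 : map_mx phi G = eta (dual U) uD by rewrite /G eta_nat ?uU_N0 // psi_uU.
have h2 : eta (dual U) uD = map_mx (@dinj _ U) G + map_mx (dmap (ialg U)) E.
  by rewrite eta_add ?(N0_map _ uU_N0) ?e_N0 // -eta_nat ?uU_N0 // eta_e.
have := congr1 (fun M : 'M[dual U]_(1, n) => M 0 j) (etrans h1 h2); rewrite !mxE => ->.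
have := E_fst j; rewrite /kk; case: (E 0 j) => [u v] /= ->.
transitivity ((G 0 j + ialg U 0, 0 + ialg U v) : dual U); first by [].
by rewrite /ialg scale0r addr0 add0r.
Qed.

Lemma e_entry i : e 0 i = if i == i0 then ((0, 1) : dual U) else 0.
Proof.
rewrite /e !mxE; case: ifP => _; last exact: rmorph0.
transitivity ((ialg U 0, ialg U 1) : dual U); first by [].
by rewrite /ialg scale0r scale1r.
Qed.

Lemma rhoD_eq : rho uD zD =1 (@dinj _ U \o qC).
Proof.
apply: mpoly_morph_eq => [k|i].
  rewrite rho_C /= -algU; symmetry; exact: (lrm_alg (@dinj _ U) k).
rewrite rho_X /=; case: ifP => [/eqP -> //|hi].
rewrite /uD [LHS]mxE e_entry hi addr0 !mxE hi; by [].
Qed.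

Lemma uD_i0 : uD 0 i0 = ((W, 1) : dual U).
Proof.
rewrite /uD [LHS]mxE e_entry !mxE !eqxx.
transitivity ((W + 0, 0 + 1) : dual U); first by [].
by rewrite addr0 add0r.
Qed.

Lemma phi_val (g : U) : phi g = (g, (map_poly qC (deriv (val g))).[W]).
Proof.
rewrite /psi (eq_map_poly rhoD_eq) map_poly_comp uD_i0 horner_dual E1.
by rewrite deriv_map.
Qed.

Definition gj j : {poly R} := val (G 0 j).
Definition r_ j : R := (gj j)`_0.

Lemma size_deriv_le (q : {poly R}) : (size (deriv q) <= size q)%N.
Proof. rewrite /deriv; exact: leq_trans (size_poly _ _) (leq_pred _). Qed.

Lemma deriv_gj j : deriv (gj j) = ((kk j)%:MP)%:P.
Proof.
have := phiG j; rewrite phi_val => /(congr1 snd) /= h.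
have := congr1 val h; rewrite valH algU val_qC rmodp_small // size_hW ltnS.
exact: leq_trans (size_deriv_le _) (size_valU _).
Qed.

Lemma nat_neq0 k : (0 < k < p)%N -> (k%:R : K) != 0.
Proof. by case/andP => h1 h2; rewrite -(dvdn_pcharf hp) gtnNdvd. Qed.

Lemma gj_form j : gj j = (r_ j)%:P + ((kk j)%:MP)%:P * 'X.
Proof.
apply/polyP => i; rewrite coefD coefC coefCM coefX.
case: i => [|[|i]] /=.
- by rewrite mulr0 addr0.
- have := congr1 (fun q : {poly R} => q`_0) (deriv_gj j); rewrite coef_deriv coefC /= mulr1n => ->.
  by rewrite add0r mulr1.
- rewrite add0r mulr0.
  case: (ltnP i.+2 p) => hi; last exact: nth_default (leq_trans (size_valU _) hi).
  have := congr1 (fun q : {poly R} => q`_i.+1) (deriv_gj j); rewrite coef_deriv coefC /=.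
  rewrite -scaler_nat => /(congr1 (fun v => (i.+2%:R : K)^-1 *: v)).
  by rewrite scalerA mulVf ?nat_neq0 // scale1r scaler0.
Qed.

Lemma G_form j : G 0 j = qC (r_ j) + qC ((kk j)%:MP) * W.
Proof.
rewrite -[LHS]E1 -/(gj j) gj_form rmorphD rmorphM /= !map_polyC map_polyX /=.
by rewrite hornerD hornerC hornerCM hornerX.
Qed.

Lemma rel : \sum_(j < n) (r_ j ^+ p + (kk j)%:MP ^+ p * hR) * (c j)%:MP = 0.
Proof.
have /eqP hG := eta_N0 uU_N0.
apply: qC_inj; rewrite qC0 -hG qC_sum; apply: eq_bigr => j _.
rewrite -/G G_form (frobD (pcharA hp U)) exprMn W_exp algU.
by rewrite -!qC_exp -!qC_mul -qC_add -qC_mul.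
Qed.

Local Notation RL := {mpoly L[n]}.
Local Notation pbi i := (tnth (pb L) i).
Definition mu : {rmorphism R -> RL} :=
  GRing.RMorphism.clone _ _ (map_mpoly (in_alg L)) _.
Definition alpha0 : L := \sum_(j < n) kk j *: pbi j.
Definition aa : L := alpha0 / pbi i0.
Definition sL : RL := \sum_(j < n) pbi j *: mu (r_ j).
Definition tL : RL := \sum_(i < n | i != i0) (aa * pbi i) *: 'X_i.

Lemma pcharRL : p \in [pchar RL].
Proof. by rewrite (pchar_lalg RL) (pcharA hp L). Qed.

Lemma mu_Z k r : mu (k *: r) = k%:A *: mu r.
Proof. exact: map_mpolyZ. Qed.
Lemma mu_X i : mu 'X_i = 'X_i.
Proof. exact: map_mpolyX. Qed.

Lemma mu_coef r m : (mu r)@_m = (r@_m)%:A.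
Proof. exact: mcoeff_map_mpoly. Qed.

Lemma alpha0_exp : alpha0 ^+ p = (\sum_(j < n) c j * kk j ^+ p)%:A.
Proof.
rewrite /alpha0 (frob_sum (pcharA hp L)) scaler_suml; apply: eq_bigr => j _.
by rewrite exprZn (frobcE hL1) scalerA mulrC.
Qed.

Lemma rel' : \sum_(j < n) c j *: r_ j ^+ p = - (\sum_(j < n) c j * kk j ^+ p) *: hR.
Proof.
transitivity (\sum_(j < n) r_ j ^+ p * (c j)%:MP).
  by apply: eq_bigr => j _; rewrite mulrC mul_mpolyC.
have := rel; under eq_bigr do rewrite mulrDl.
rewrite big_split /= => /eqP; rewrite addr_eq0 => /eqP ->.
rewrite scaleNr scaler_suml; congr (- _).
apply: eq_bigr => j _.
by rewrite -rmorphXn mulrC mulrA -rmorphM mul_mpolyC scalerA.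
Qed.

Lemma sL_exp : sL ^+ p = mu (\sum_(j < n) c j *: r_ j ^+ p).
Proof.
rewrite /sL (frob_sum pcharRL) rmorph_sum; apply: eq_bigr => j _.
by rewrite exprZn (frobcE hL1) mu_Z rmorphXn.
Qed.

Lemma mu_hR : mu hR = - ((c i0)^-1)%:A *: \sum_(i < n | i != i0) (c i)%:A *: 'X_i ^+ p.
Proof.
rewrite /hR mu_Z rmorph_sum; congr (_ *: _); first by rewrite scaleNr.
by apply: eq_bigr => i _; rewrite mu_Z rmorphXn mu_X.
Qed.

Lemma sL_tL_exp : sL ^+ p = tL ^+ p.
Proof.
rewrite sL_exp rel' mu_Z mu_hR /tL (frob_sum pcharRL) scalerA scaler_sumr.
apply: eq_bigr => i _.
rewrite scalerA exprZn exprMn /aa expr_div_n alpha0_exp !(frobcE hL1).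
congr (_ *: _).
rewrite scaleNr mulNr mulrN opprK.
by rewrite [((c i0)^-1)%:A](fmorphV (in_alg L)).
Qed.

Lemma sL_eq : sL = tL.
Proof.
have : (sL - tL) ^+ p == 0 by rewrite (frobB pcharRL) sL_tL_exp subrr.
by rewrite expf_eq0 p_gt0 /= subr_eq0 => /eqP.
Qed.

Lemma sL_coef m : sL@_m = \sum_(j < n) (r_ j)@_m *: pbi j.
Proof.
rewrite /sL raddf_sum; apply: eq_bigr => j _.
transitivity (pbi j * (mu (r_ j))@_m); first exact: mcoeffZ.
by rewrite mu_coef mulr_algr.
Qed.

Lemma tL_coef m : tL@_m = \sum_(i < n | i != i0) (aa * pbi i) * (U_(i) == m)%:R.
Proof.
rewrite /tL raddf_sum; apply: eq_bigr => i _.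
transitivity ((aa * pbi i) * ('X_i : RL)@_m); first exact: mcoeffZ.
by rewrite mcoeffX.
Qed.

Definition B j i : K := if i == i0 then kk j else (r_ j)@_U_(i).

Lemma B_span i : \sum_(j < n) B j i *: pbi j = aa * pbi i.
Proof.
case: (eqVneq i i0) => [->|hi].
  under eq_bigr do rewrite /B eqxx.
  by rewrite /aa divfK // pb_nz.
under eq_bigr do rewrite /B (negPf hi).
rewrite -sL_coef sL_eq tL_coef (bigD1 i) ?hi //= eqxx mulr1 big1 ?addr0 //.
by move=> i' /andP [_ hi']; rewrite eq_mnm1 (negPf hi') mulr0.
Qed.

Lemma cf_B i j : coord (pb L) j (aa * pbi i) = B j i.
Proof. by rewrite -B_span coord_pb_sum. Qed.

Lemma r_form j : r_ j = \sum_(i < n | i != i0) (r_ j)@_U_(i) *: 'X_i.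
Proof.
apply/mpolyP => m; rewrite raddf_sum /=.
under eq_bigr do rewrite mcoeffZ mcoeffX.
case: (pickP (fun i : 'I_n => (i != i0) && (U_(i) == m))) => [i /andP [hi /eqP hm] | hnone].
  rewrite -hm (bigD1 i) //= eqxx mulr1 big1 ?addr0 //.
  by move=> i' /andP [_ hi']; rewrite eq_mnm1 (negPf hi') mulr0.
rewrite big1 => [|i hi]; last by have := hnone i; rewrite hi /= => ->; rewrite mulr0.
have h := sL_coef m; rewrite sL_eq tL_coef big1 in h => [|i hi]; last first.
  by have := hnone i; rewrite hi /= => ->; rewrite mulr0.
have := coord_pb_sum (fun j => (r_ j)@_m) j; rewrite -h linear0 => <-.
by [].
Qed.

Lemma eta_eq (A : comAlgType K) (x : 'rV[A]_n) (Hx : inN0 p x) : eta A x = mulL aa x.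
Proof.
have hpsi := psi_uU (0 : A) Hx.
rewrite -{1}hpsi -eta_nat ?uU_N0 // -/G.
apply/rowP => j; rewrite !mxE G_form rmorphD rmorphM /= !psi_qC psi_W rho_C.
rewrite (r_form j) rmorph_sum /=.
under eq_bigr do rewrite rho_Z rho_X.
under [RHS]eq_bigr do rewrite cf_B.
rewrite [RHS](bigD1 i0) //= /B eqxx addrC mulrC; congr (_ + _).
by apply: eq_bigr => i hi; rewrite (negPf hi) mulrC.
Qed.

End Main.
End Univ.


End Helpers.
Import Helpers.

Lemma e'_sum (K : fieldType) (L : fieldExtType K) (k : 'I_(\dim {:L}) -> K) :
  (\sum_i (e' L) 0 i * ((k i)%:A : dual K^o)).2 = k (i0 L).
Proof.
rewrite (bigD1 (i0 L)) // big1 => [|i hi]; last by rewrite mxE (negPf hi) mul0r.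
have E : forall x : dual K^o, (x + 0).2 = x.2 by move=> x; rewrite addr0.
apply: etrans (E _) _.
rewrite mxE eqxx dmulE.
transitivity ((0 * (k (i0 L) * 0) + 1 * (k (i0 L) * 1)) : K^o); first reflexivity.
by rewrite mul0r add0r mul1r mulr1.
Qed.

Lemma inj_part (K : fieldType) (L : fieldExtType K) (p : nat)
  (hp : p \in [pchar K]) (a b : L) :
  (forall (A : comAlgType K) (x : 'rV[A]_(\dim {:L})), inN0 p x ->
        mulL a x = mulL b x) -> a = b.
Proof.
move=> h; have hab := h (dual K^o) (e' L) (e'_N0 L hp).
have hc : forall j, coord (pb L) j (a * tnth (pb L) (i0 L)) = coord (pb L) j (b * tnth (pb L) (i0 L)).
  move=> j; have := congr1 (fun M : 'rV[dual K^o]_(\dim {:L}) => (M 0 j).2) hab.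
  rewrite /mulL mxE. rewrite mxE.
  rewrite (@e'_sum _ _ (fun i => coord (pb L) j (a * tnth (pb L) i))).
  by rewrite (@e'_sum _ _ (fun i => coord (pb L) j (b * tnth (pb L) i))).
have : a * tnth (pb L) (i0 L) = b * tnth (pb L) (i0 L).
  by rewrite (pb_span (a * _)) (pb_span (b * _)); apply: eq_bigr => j _; rewrite hc.
by move/mulIf; apply; exact: pb_nz.
Qed.

Theorem proposition9p1 (K : fieldType) (L : fieldExtType K) (p : nat)
  (hp : p \in [pchar K])
  (hL1 : forall y : L, y ^+ p \in 1%VS)
  (hL2 : forall k : K, exists y : L, y ^+ p = k%:A) :
  (* a' |-> multiplication by a' lands in End_K(N_0) *)
  (forall a : L, is_endo p (mulL a)) /\
  (* it is injective *)
  (forall a b : L,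
     (forall (A : comAlgType K) (x : 'rV[A]_(\dim {:L})), inN0 p x ->
        mulL a x = mulL b x) -> a = b) /\
  (* it is surjective *)
  (forall eta : forall A : comAlgType K, 'rV[A]_(\dim {:L}) -> 'rV[A]_(\dim {:L}),
     is_endo p eta ->
     exists a : L, forall (A : comAlgType K) (x : 'rV[A]_(\dim {:L})), inN0 p x ->
        eta A x = mulL a x) /\
  (* it is a ring homomorphism (End ring: pointwise sum, composition) *)
  (forall (A : comAlgType K) (x : 'rV[A]_(\dim {:L})), inN0 p x -> mulL 1 x = x) /\
  (forall (a b : L) (A : comAlgType K) (x : 'rV[A]_(\dim {:L})), inN0 p x ->
     mulL (a + b) x = mulL a x + mulL b x) /\
  (forall (a b : L) (A : comAlgType K) (x : 'rV[A]_(\dim {:L})), inN0 p x ->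
     mulL (a * b) x = mulL a (mulL b x)).
Proof.
split; first exact: (mulL_endo hp hL1).
split; first exact: (@inj_part K L p hp).
split.
  move=> eta Hend; exists (aa eta) => A x Hx.
  exact: (eta_eq hp hL1 Hend Hx).
split; first by move=> A x _; exact: mulL1.
split; first by move=> a b A x _; exact: mulLD.
by move=> a b A x _; exact: mulLM.
Qed.
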